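(* Let $p\in[0,1]$ be unknown, and let $\theta\in[0,1)$, $\eta\in(0,1)$ with $\theta+\eta<1$, and $\delta\in(0,1]$. Suppose \textsc{Tester} is a procedure satisfying the tester guarantee described in the context. Then the algorithm \textsc{BinCert}$(\theta,\eta,\delta)$ (defined in the context) terminates, and $$\Pr[\textsc{BinCert}(\theta,\eta,\delta)\text{ returns Yes}]\ge 1-\delta \quad\text{whenever } p\le\theta,$$ $$\Pr[\textsc{BinCert}(\theta,\eta,\delta)\text{ returns No}]\ge 1-\delta \quad\text{whenever } p>\theta+\eta.$$
   Context: Setting: there is an unknown number $p\in[0,1]$ (the probability that a 0-1 property holds on a random input). A procedure $\textsc{Tester}(a,b,\delta')$, for $0\le a<b\le 1$ and $\delta'\in(0,1]$, is a randomized procedure returning one of Yes, No, None, using fresh randomness independent of all other calls, and satisfying the tester guarantee: if $p\le a$ then $\Pr[\textsc{Tester}(a,b,\delta')\text{ returns Yes}]\ge 1-\delta'$, and if $p> b$ then $\Pr[\textsc{Tester}(a,b,\delta')\text{ returns No}]\ge 1-\delta'$. Algorithm $\textsc{BinCert}(\theta,\eta,\delta)$: Let $\log$ denote $\log_2$ and set $n=3+\max(0,\log(\theta/\eta))+\max(0,\log((1-\theta-\eta)/\eta))$ (where $\max(0,\log(\theta/\eta))$ is taken to be $0$ if $\theta=0$), and $\delta_{\min}=\delta/n$. The algorithm maintains a ''left'' interval $(a_L,b_L)$ and a ''right'' interval $(a_R,b_R)$, both initially undefined. The left update is: if $\theta=0$, set $(a_L,b_L)=(0,\eta)$; otherwise,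 if the left interval is undefined, set it to $(0,\theta)$; otherwise with $\alpha=b_L-a_L$ set it to $(b_L-\max(\eta,\alpha/2),\,b_L)$. The right update is: if the right interval is undefined, set it to $(\theta+\eta,1)$; otherwise with $\alpha=b_R-a_R$ set it to $(a_R,\,a_R+\max(\eta,\alpha/2))$. The algorithm repeats the following loop: (1) perform the left update; if $b_L-a_L>\eta$, call $\textsc{Tester}(a_L,b_L,\delta_{\min})$ and if it returns Yes, return Yes. (2) Perform the right update; if $b_R-a_R>\eta$, call $\textsc{Tester}(a_R,b_R,\delta_{\min})$ and if it returns No, return No. (3) If $b_R-a_R\le\eta$ and $b_L-a_L\le\eta$, return the output of $\textsc{Tester}(\theta,\theta+\eta,\delta_{\min})$. *)

(* Defs.v *)
From Stdlib Require Import Reals Lra.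
Open Scope R_scope.

Inductive outcome := Yes | No | NoneOut.

(** A (randomized) tester, for a fixed unknown p, is described by its output
    distribution: [T a b d o] = Pr[Tester(a,b,d) returns o]. Each call uses
    fresh independent randomness, so the output distribution of BinCert is
    obtained by the usual sequential composition of these distributions. *)
Definition tester := R -> R -> R -> outcome -> R.

Definition is_dist (f : outcome -> R) : Prop :=
  (forall o, 0 <= f o) /\ f Yes + f No + f NoneOut = 1.

Definition tester_guarantee (p : R) (T : tester) : Prop :=
  forall a b d, 0 <= a -> a < b -> b <= 1 -> 0 < d -> d <= 1 ->
    is_dist (T a b d) /\
    (p <= a -> T a b d Yes >= 1 - d) /\
    (p > b -> T a b d No >= 1 - d).

Definition log2 (x : R) : R := ln x / ln 2.

Definition bincert_n (theta eta : R) : R :=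
  3 + (if Req_EM_T theta 0 then 0 else Rmax 0 (log2 (theta / eta)))
    + Rmax 0 (log2 ((1 - theta - eta) / eta)).

Definition left_update (theta eta : R) (L : option (R * R)) : R * R :=
  if Req_EM_T theta 0 then (0, eta)
  else match L with
       | None => (0, theta)
       | Some (a, b) => (b - Rmax eta ((b - a) / 2), b)
       end.

Definition right_update (theta eta : R) (Rt : option (R * R)) : R * R :=
  match Rt with
  | None => (theta + eta, 1)
  | Some (a, b) => (a, a + Rmax eta ((b - a) / 2))
  end.

Definition ind_yes (o : outcome) : R := match o with Yes => 1 | _ => 0 end.
Definition ind_no (o : outcome) : R := match o with No => 1 | _ => 0 end.

(** [bincert_run T theta eta dmin fuel L Rt] runs at most [fuel] iterations of
    the loop of BinCert from the interval state (L, Rt).  It returns [None] if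
    the loop has not terminated within [fuel] iterations (along any branch:
    the interval sequence is deterministic), and otherwise [Some d] where
    [d o] is the probability that BinCert returns [o]. *)
Fixpoint bincert_run (T : tester) (theta eta dmin : R) (fuel : nat)
    (L Rt : option (R * R)) : option (outcome -> R) :=
  match fuel with
  | O => None
  | S k =>
    let '(aL, bL) := left_update theta eta L in
    (* step (1): probability of returning Yes here *)
    let pY := if Rlt_dec eta (bL - aL) then T aL bL dmin Yes else 0 in
    let '(aR, bR) := right_update theta eta Rt in
    (* step (2): probability of returning No here (given not returned before) *)
    let qN := if Rlt_dec eta (bR - aR) then T aR bR dmin No else 0 in
    let cont :=
      if Rle_dec (bR - aR) eta then
        if Rle_dec (bL - aL) eta then Some (T theta (theta + eta) dmin)
        else bincert_run T theta eta dmin k (Some (aL, bL)) (Some (aR, bR))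
      else bincert_run T theta eta dmin k (Some (aL, bL)) (Some (aR, bR)) in
    match cont with
    | None => None
    | Some d => Some (fun o => ind_yes o * pY
                        + (1 - pY) * (ind_no o * qN + (1 - qN) * d o))
    end
  end.

Definition bincert (T : tester) (theta eta delta : R) (fuel : nat)
  : option (outcome -> R) :=
  bincert_run T theta eta (delta / bincert_n theta eta) fuel None None.

(* Main.v *)
Require Import Defs.
From Stdlib Require Import Reals.
From Stdlib Require Import Lra Lia Psatz ZArith.
Open Scope R_scope.

Definition width (u : R*R) : R := snd u - fst u.
Definition InvL (theta eta : R) (u : R*R) : Prop :=
  (eta < snd u - fst u -> 0 <= fst u /\ snd u = theta) /\ (theta <> 0 -> snd u = theta).
Definition InvR (theta eta : R) (u : R*R) : Prop :=
  fst u = theta + eta /\ (eta < snd u - fst u -> snd u <= 1).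

Lemma nextL theta eta aL bL : 0 < eta -> InvL theta eta (aL,bL) ->
  InvL theta eta (left_update theta eta (Some (aL,bL))) /\
  width (left_update theta eta (Some (aL,bL))) <= Rmax eta ((bL-aL)/2).
Proof.
  intros He [H1 H2]; simpl in *. unfold left_update, width, InvL.
  destruct (Req_EM_T theta 0) as [E|E]; simpl.
  - split; [split; intros; lra|]. unfold Rmax; destruct Rle_dec; lra.
  - specialize (H2 E). unfold Rmax in *; destruct Rle_dec; simpl.
    + split; [split; intros|]; try lra.
    + split; [split; intros|]; lra.
Qed.

Lemma nextR theta eta aR bR : 0 < eta -> InvR theta eta (aR,bR) ->
  InvR theta eta (right_update theta eta (Some (aR,bR))) /\
  width (right_update theta eta (Some (aR,bR))) <= Rmax eta ((bR-aR)/2).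
Proof.
  intros He [H1 H2]; simpl in *. unfold right_update, width, InvR; simpl.
  unfold Rmax in *; destruct Rle_dec.
  - split; [split; intros|]; try lra; try (assert (bR <= 1) by (apply H2; lra); lra).
  - split; [split; intros|]; lra.
Qed.

Lemma halve w k eta : 0 < eta -> w <= eta * 2 ^ (S k) -> Rmax eta (w/2) <= eta * 2 ^ k.
Proof.
  intros. simpl in H0. assert (1 <= 2^k) by (apply pow_R1_Rle; lra).
  unfold Rmax; destruct Rle_dec; nra.
Qed.

Lemma count eta w c : 0 < eta -> w <= eta * 2 ^ c ->
  exists c', Rmax eta (w/2) <= eta * 2 ^ c' /\ (eta < w -> INR c' + 1 = INR c)
     /\ (~ eta < w -> c' = c).
Proof.
  intros. destruct (Rlt_dec eta w).
  - destruct c as [|c]. { simpl in H0; lra. }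
    exists c. split. { apply halve; auto. }
    split; intros; [rewrite S_INR; ring | contradiction].
  - exists c. split.
    + assert (1 <= 2^c) by (apply pow_R1_Rle; lra). unfold Rmax; destruct Rle_dec; nra.
    + split; intros; [contradiction | reflexivity].
Qed.

Lemma comb_yes pY qN y E : 0 <= pY <= 1 -> 0 <= qN <= 1 -> 0 <= E -> y >= 1 - E ->
  1 * pY + (1 - pY) * (0 * qN + (1 - qN) * y) >= 1 - (E + qN).
Proof.
  intros. assert ((1-qN)*y >= 1 - E - qN) by nra. nra.
Qed.

Lemma comb_no pY qN y E : 0 <= pY <= 1 -> 0 <= qN <= 1 -> 0 <= E -> y >= 1 - E ->
  0 * pY + (1 - pY) * (1 * qN + (1 - qN) * y) >= 1 - (E + pY).
Proof.
  intros. assert (qN + (1-qN)*y >= 1 - E) by nra. nra.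
Qed.

Definition Bounds (p theta eta dmin : R) (d : outcome -> R) (cL cR : nat) : Prop :=
  (p <= theta -> d Yes >= 1 - (INR cR + 1) * dmin) /\
  (p > theta + eta -> d No >= 1 - (INR cL + 1) * dmin).

Lemma step (p theta eta dmin : R) (T : tester)
  (Hp : 0 <= p <= 1) (Ht : 0 <= theta) (He : 0 < eta) (Hte : theta + eta <= 1)
  (Hd : 0 < dmin <= 1) (HT : tester_guarantee p T)
  fuel L Rt cL cR :
  InvL theta eta (left_update theta eta L) -> InvR theta eta (right_update theta eta Rt) ->
  width (left_update theta eta L) <= eta * 2 ^ cL ->
  width (right_update theta eta Rt) <= eta * 2 ^ cR ->
  (forall aL bL aR bR, left_update theta eta L = (aL,bL) -> right_update theta eta Rt = (aR,bR) ->
    ~ (bR - aR <= eta /\ bL - aL <= eta) -> forall cL' cR',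
    Rmax eta ((bL-aL)/2) <= eta * 2 ^ cL' -> Rmax eta ((bR-aR)/2) <= eta * 2 ^ cR' ->
    exists d, bincert_run T theta eta dmin fuel (Some (aL,bL)) (Some (aR,bR)) = Some d
      /\ Bounds p theta eta dmin d cL' cR') ->
  exists d, bincert_run T theta eta dmin (S fuel) L Rt = Some d /\ Bounds p theta eta dmin d cL cR.
Proof.
  intros IL IR WL WR Hc.
  cbn [bincert_run].
  destruct (left_update theta eta L) as [aL bL] eqn:EL.
  destruct (right_update theta eta Rt) as [aR bR] eqn:ER.
  unfold InvL, InvR, width in *; simpl in *.
  destruct IL as [IL1 IL2]. destruct IR as [IR1 IR2].
  set (pY := if Rlt_dec eta (bL - aL) then T aL bL dmin Yes else 0).
  set (qN := if Rlt_dec eta (bR - aR) then T aR bR dmin No else 0).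
  assert (HpY : 0 <= pY <= 1 /\ (p > theta -> pY <= dmin) /\ (~ eta < bL - aL -> pY = 0)).
  { unfold pY; destruct (Rlt_dec eta (bL - aL)) as [c|c].
    - destruct (IL1 c) as [h1 h2].
      destruct (HT aL bL dmin) as [[D1 D2] [G1 G2]]; try lra.
      pose proof (D1 Yes); pose proof (D1 No); pose proof (D1 NoneOut).
      split; [lra|]. split; [intros; assert (T aL bL dmin No >= 1 - dmin) by (apply G2; lra); lra|].
      intros; contradiction.
    - split; [lra|]. split; intros; lra. }
  assert (HqN : 0 <= qN <= 1 /\ (p <= theta -> qN <= dmin) /\ (~ eta < bR - aR -> qN = 0)).
  { unfold qN; destruct (Rlt_dec eta (bR - aR)) as [c|c].
    - pose proof (IR2 c) as h1.
      destruct (HT aR bR dmin) as [[D1 D2] [G1 G2]]; try lra.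
      pose proof (D1 Yes); pose proof (D1 No); pose proof (D1 NoneOut).
      split; [lra|]. split; [intros; assert (T aR bR dmin Yes >= 1 - dmin) by (apply G1; lra); lra|].
      intros; contradiction.
    - split; [lra|]. split; intros; lra. }
  clearbody pY qN.
  destruct HpY as [P1 [P2 P3]]. destruct HqN as [Q1 [Q2 Q3]].
  destruct (count eta (bL - aL) cL He WL) as [cL' [CL1 [CL2 CL3]]].
  destruct (count eta (bR - aR) cR He WR) as [cR' [CR1 [CR2 CR3]]].
  pose proof (pos_INR cL). pose proof (pos_INR cR). pose proof (pos_INR cL'). pose proof (pos_INR cR').
  destruct (Rle_dec (bR - aR) eta) as [r1|r1]; [destruct (Rle_dec (bL - aL) eta) as [r2|r2]|].
  -
    destruct (HT theta (theta + eta) dmin) as [[D1 D2] [G1 G2]]; try lra.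
    rewrite P3 in * by lra. rewrite Q3 in * by lra.
    eexists; split; [reflexivity|]. split; intro hp; cbn [ind_yes ind_no].
    + specialize (G1 hp). eapply Rge_trans; [apply (comb_yes 0 0 _ dmin); lra|]. nra.
    + assert (hp' : p > theta + eta) by lra. specialize (G2 hp').
      eapply Rge_trans; [apply (comb_no 0 0 _ dmin); lra|]. nra.
  - destruct (Hc aL bL aR bR eq_refl eq_refl ltac:(tauto) cL' cR' CL1 CR1) as [d' [Hd' [B1 B2]]].
    rewrite Hd'. eexists; split; [reflexivity|]. split; intro hp; cbn [ind_yes ind_no].
    + specialize (B1 hp). eapply Rge_trans; [apply (comb_yes _ _ _ ((INR cR' + 1) * dmin)); nra|].
      destruct (Rlt_dec eta (bR - aR)) as [c|c]; [lra|]. rewrite (CR3 c). rewrite (Q3 c). lra.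
    + specialize (B2 hp). eapply Rge_trans; [apply (comb_no _ _ _ ((INR cL' + 1) * dmin)); nra|].
      destruct (Rlt_dec eta (bL - aL)) as [c|c].
      * specialize (CL2 c). assert (pY <= dmin) by (apply P2; lra). nra.
      * rewrite (CL3 c). rewrite (P3 c). lra.
  - destruct (Hc aL bL aR bR eq_refl eq_refl ltac:(tauto) cL' cR' CL1 CR1) as [d' [Hd' [B1 B2]]].
    rewrite Hd'. eexists; split; [reflexivity|]. split; intro hp; cbn [ind_yes ind_no].
    + specialize (B1 hp). eapply Rge_trans; [apply (comb_yes _ _ _ ((INR cR' + 1) * dmin)); nra|].
      destruct (Rlt_dec eta (bR - aR)) as [c|c].
      * specialize (CR2 c). specialize (Q2 hp). nra.
      * lra.
    + specialize (B2 hp). eapply Rge_trans; [apply (comb_no _ _ _ ((INR cL' + 1) * dmin)); nra|].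
      destruct (Rlt_dec eta (bL - aL)) as [c|c].
      * specialize (CL2 c). assert (pY <= dmin) by (apply P2; lra). nra.
      * rewrite (CL3 c). rewrite (P3 c). lra.
Qed.

Lemma main (p theta eta dmin : R) (T : tester)
  (Hp : 0 <= p <= 1) (Ht : 0 <= theta) (He : 0 < eta) (Hte : theta + eta <= 1)
  (Hd : 0 < dmin <= 1) (HT : tester_guarantee p T) :
  forall k L Rt cL cR,
  InvL theta eta (left_update theta eta L) -> InvR theta eta (right_update theta eta Rt) ->
  width (left_update theta eta L) <= eta * 2 ^ cL ->
  width (right_update theta eta Rt) <= eta * 2 ^ cR ->
  width (left_update theta eta L) <= eta * 2 ^ k ->
  width (right_update theta eta Rt) <= eta * 2 ^ k ->
  exists d, bincert_run T theta eta dmin (S k) L Rt = Some d /\ Bounds p theta eta dmin d cL cR.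
Proof.
  induction k; intros L Rt cL cR IL IR WL WR KL KR;
    apply step; auto; intros aL bL aR bR EL ER Hnot cL' cR' h1 h2.
  - exfalso. unfold width in KL, KR. rewrite EL in KL. rewrite ER in KR. simpl in *. lra.
  - rewrite EL in IL, KL. rewrite ER in IR, KR.
    destruct (nextL theta eta aL bL He IL) as [NL1 NL2].
    destruct (nextR theta eta aR bR He IR) as [NR1 NR2].
    unfold width in KL, KR; simpl in KL, KR.
    pose proof (halve _ _ _ He KL). pose proof (halve _ _ _ He KR).
    apply IHk; auto; lra.
Qed.

Lemma exists_c (x : R) : 0 < x -> exists c : nat, x <= 2 ^ c /\ INR c <= 1 + Rmax 0 (log2 x).
Proof.
  intros Hx. pose proof (Rmax_l 0 (log2 x)).
  destruct (Rle_dec x 1) as [h|h].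
  - exists 0%nat. simpl. lra.
  - assert (Hl2 : 0 < ln 2) by (pose proof ln_lt_2; lra).
    assert (Hlx : 0 < ln x) by (rewrite <- ln_1; apply ln_increasing; lra).
    assert (Hlog : 0 < log2 x) by (unfold log2; apply Rdiv_lt_0_compat; lra).
    destruct (archimed (log2 x)) as [A1 A2].
    assert (Hz : (0 < up (log2 x))%Z) by (apply lt_0_IZR; lra).
    exists (Z.to_nat (up (log2 x))).
    assert (HI : INR (Z.to_nat (up (log2 x))) = IZR (up (log2 x))).
    { rewrite INR_IZR_INZ, Z2Nat.id; [reflexivity | lia]. }
    rewrite Rmax_right by lra. split; [|lra].
    rewrite <- Rpower_pow by lra. unfold Rpower. rewrite HI.
    rewrite <- (exp_ln x) at 1 by lra. left. apply exp_increasing.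
    replace (ln x) with (log2 x * ln 2) by (unfold log2; field; lra).
    nra.
Qed.

Theorem theorem1 (p theta eta delta : R) (T : tester)
  (Hp : 0 <= p <= 1) (Htheta : 0 <= theta < 1) (Heta : 0 < eta < 1)
  (Hte : theta + eta < 1) (Hdelta : 0 < delta <= 1)
  (HT : tester_guarantee p T) :
  exists (N : nat) (d : outcome -> R),
    bincert T theta eta delta N = Some d /\
    (p <= theta -> d Yes >= 1 - delta) /\
    (p > theta + eta -> d No >= 1 - delta).
Proof.
  set (A := if Req_EM_T theta 0 then 0 else Rmax 0 (log2 (theta / eta))).
  set (B := Rmax 0 (log2 ((1 - theta - eta) / eta))).
  assert (HA : 0 <= A) by (unfold A; destruct Req_EM_T; [lra | apply Rmax_l]).
  assert (HB : 0 <= B) by (unfold B; apply Rmax_l).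
  assert (Hn : bincert_n theta eta = 3 + A + B) by reflexivity.
  assert (HcL : exists cL : nat, width (left_update theta eta None) <= eta * 2 ^ cL /\ INR cL <= 1 + A).
  { unfold A, left_update, width. destruct (Req_EM_T theta 0) as [E|E]; simpl.
    - exists 0%nat. simpl. lra.
    - destruct (exists_c (theta / eta)) as [c [c1 c2]].
      { apply Rdiv_lt_0_compat; lra. }
      exists c. split; [|lra].
      apply (Rmult_le_compat_l eta) in c1; [|lra].
      replace (eta * (theta / eta)) with theta in c1 by (field; lra). lra. }
  assert (HcR : exists cR : nat, width (right_update theta eta None) <= eta * 2 ^ cR /\ INR cR <= 1 + B).
  { unfold B, right_update, width; simpl.
    destruct (exists_c ((1 - theta - eta) / eta)) as [c [c1 c2]].
    { apply Rdiv_lt_0_compat; lra. }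
    exists c. split; [|lra].
    apply (Rmult_le_compat_l eta) in c1; [|lra].
    replace (eta * ((1 - theta - eta) / eta)) with (1 - theta - eta) in c1 by (field; lra). lra. }
  destruct HcL as [cL [WL CL]]. destruct HcR as [cR [WR CR]].
  set (n := bincert_n theta eta) in *.
  assert (Hdmin : 0 < delta / n <= 1).
  { split; [apply Rdiv_lt_0_compat; lra|]. apply (Rmult_le_reg_r n); [lra|].
    unfold Rdiv. rewrite Rmult_assoc, Rinv_l by lra. nra. }
  assert (IL : InvL theta eta (left_update theta eta None)).
  { unfold InvL, left_update. destruct (Req_EM_T theta 0); simpl; split; intros; lra. }
  assert (IR : InvR theta eta (right_update theta eta None)).
  { unfold InvR, right_update; simpl; split; intros; lra. }
  pose (k := Nat.max cL cR).
  assert (Kp : forall c, (c <= k)%nat -> forall w, w <= eta * 2 ^ c -> w <= eta * 2 ^ k).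
  { intros c hc w hw. pose proof (Rle_pow 2 c k ltac:(lra) hc). nra. }
  destruct (main p theta eta (delta / n) T Hp ltac:(lra) ltac:(lra) ltac:(lra) Hdmin HT
     k None None cL cR IL IR WL WR (Kp cL ltac:(lia) _ WL) (Kp cR ltac:(lia) _ WR))
    as [d [Hd [B1 B2]]].
  exists (S k), d. split; [exact Hd|].
  assert (Hnd : n * (delta / n) = delta) by (field; lra).
  split; intro hp.
  - specialize (B1 hp). assert ((INR cR + 1) * (delta / n) <= delta) by nra. lra.
  - specialize (B2 hp). assert ((INR cL + 1) * (delta / n) <= delta) by nra. lra.
Qed.
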